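(* Let $\ell\ge 0$ and let $G=(X\uplus Z,E)$ be the graph with $|Z|=2^\ell$ and $|X|=\binom{2^\ell}{2}$ in which every pair $\{z_1,z_2\}$ of distinct vertices of $Z$ is joined by an edge, and for every such pair there is a distinct vertex $x\in X$ adjacent exactly to $z_1$ and $z_2$. An arbitrary vertex of $Z$ is the root. Fix a (possibly randomized) online algorithm $A$ for the online Steiner tree problem on $G$ (terminals from $X$ arrive one by one; after each arrival $A$ adds edges, never removing any, so that all terminals so far are connected to the root). Then for every subset $S\subseteq Z$ with $|S|=2^s$, $0\le s\le\ell$, there exists a request sequence $\sigma=\sigma_S$ of terminals from $X$ such that: (i) for every $x\in\sigma$, both neighbors of $x$ in $G$ lie in $S$; (ii) there exists $z^*\in S$ with $\mathbb{E}[\deg'_{A,\sigma}(z^* )]\ge s/2$; (iii) there exists an offline solution $\mathrm{OFF}$ connecting all terminals of $\sigma$ to the root with $\max_{z\in S}\deg_{\mathrm{OFF},\sigma}(z)\le 1$ and $\deg_{\mathrm{OFF},\sigma}(z)=0$ for all $z\in(Z\setminus S)\cup\{z^*\}$.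
   Context: For $z\in Z$, a (online or offline) solution $B$ and request sequence $\sigma$, $\deg_{B,\sigma}(z)$ denotes the number of neighbors of $z$ among vertices of $X$ in the subgraph produced by $B$ on $\sigma$ (edges between vertices of $Z$ are ignored), and $\deg'_{B,\sigma}(z)$ denotes the number of those neighbors of $z$ in $X$ (in the produced subgraph) that also appear in $\sigma$. Expectations are over the randomness of $A$. *)

(* Defs.v *)
From HB Require Import structures.
From mathcomp Require Import all_boot all_order all_algebra.
From mathcomp Require Import all_classical all_reals all_analysis.
Set Implicit Arguments. Unset Strict Implicit. Unset Printing Implicit Defensive.
Import Order.TTheory GRing.Theory Num.Theory.

(* X is in bijection with the 2-element subsets {z1,z2} of Z: the vertex x of X
   associated with the pair {z1,z2} is adjacent exactly to z1 and z2. *)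
Definition Zv (l : nat) := 'I_(2 ^ l).
Definition Xv (l : nat) := {A : {set Zv l} | #|A| == 2}.
Definition vert (l : nat) := (Xv l + Zv l)%type.

Definition adjG (l : nat) (u v : vert l) : bool :=
  match u, v with
  | inr a, inr b => a != b
  | inl x, inr z => z \in val x
  | inr z, inl x => z \in val x
  | inl _, inl _ => false
  end.

Definition EG (l : nat) : {set {set vert l}} :=
  [set e | [exists u, exists v, adjG u v && (e == [set u; v])]].

Definition connF (l : nat) (F : {set {set vert l}}) (u v : vert l) : bool :=
  connect (fun a b => [set a; b] \in F) u v.

Definition steiner_sol (l : nat) (r : Zv l) (sigma : seq (Xv l))
    (F : {set {set vert l}}) : Prop :=
  F \subset EG l /\ (forall x, x \in sigma -> connF F (inl x) (inr r)).

(* A deterministic online algorithm: alg sigma is the subgraph it has built after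
   the requests sigma (depends only on the prefix seen so far); initially empty,
   edges are never removed, and after each request all terminals so far are
   connected to the root. *)
Definition online_alg (l : nat) (r : Zv l)
    (alg : seq (Xv l) -> {set {set vert l}}) : Prop :=
  [/\ alg [::] = finset.set0,
      (forall sigma x, alg sigma \subset alg (rcons sigma x)) &
      (forall sigma, steiner_sol r sigma (alg sigma))].

Definition degB (l : nat) (F : {set {set vert l}}) (z : Zv l) : nat :=
  #|[set x : Xv l | [set inl x; inr z] \in F]|.

Definition degB' (l : nat) (F : {set {set vert l}}) (sigma : seq (Xv l))
    (z : Zv l) : nat :=
  #|[set x : Xv l | ([set inl x; inr z] \in F) && (x \in sigma)]|.

(* Randomized algorithm: a family of deterministic online algorithms indexed by
   a random seed w drawn from a probability space; measurability: the built
   subgraph is a random variable for every request sequence. *)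
Definition rand_measurable (l : nat) (d : measure_display) (Omega : measurableType d)
    (A : Omega -> seq (Xv l) -> {set {set vert l}}) : Prop :=
  forall sigma F, measurable [set w | A w sigma = F]%classic.

Definition Edeg' (R : realType) (l : nat) (d : measure_display) (Omega : measurableType d)
    (Pr : probability Omega R) (A : Omega -> seq (Xv l) -> {set {set vert l}})
    (sigma : seq (Xv l)) (z : Zv l) : \bar R :=
  (\int[Pr]_w ((degB' (A w sigma) sigma z)%:R)%:E)%E.

(* Main.v *)
Require Import Defs.
From HB Require Import structures.
From mathcomp Require Import all_boot all_order all_algebra.
From mathcomp Require Import all_classical all_reals all_analysis.
From mathcomp Require Import measurable_realfun.
Import Order.TTheory GRing.Theory Num.Theory.
Set Implicit Arguments. Unset Strict Implicit. Unset Printing Implicit Defensive.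
Section Aux.
Variable l : nat.
Implicit Types (x y : Xv l) (z : Zv l).

Lemma alg_mono (r : Zv l) alg (H : online_alg r alg) sigma t :
  alg sigma \subset alg (sigma ++ t).
Proof.
case: H => _ Hm _.
elim/last_ind: t => [|t x IH]; first by rewrite cats0.
rewrite -rcons_cat; exact: (fintype.subset_trans IH (Hm _ _)).
Qed.

Lemma edge_of_conn (r : Zv l) (F : {set {set vert l}}) (HF : F \subset EG l) x :
  connF F (inl x) (inr r) -> exists2 z, z \in val x & [set inl x; inr z] \in F.
Proof.
move=> /connectP [p Hp Hlast].
case: p Hp Hlast => [|c p] //= /andP [Hc _] _.
have := fintype.subsetP HF _ Hc; rewrite inE => /existsP [u /existsP [v /andP [Huv /eqP E]]].
have H1 := set21 (inl x : vert l) c; rewrite E !inE in H1.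
have H2 := set22 (inl x : vert l) c; rewrite E !inE in H2.
case: u v Huv E H1 H2 => [xu|zu] [xv|zv] //= Huv E H1 H2.
- have Ex : xu = x by case/orP: H1 => /eqP [].
  subst xu.
  case/orP: H2 => /eqP Hc'; last by exists zv; rewrite -?Hc'.
  have : (inr zv : vert l) \in [set inl x; c] by rewrite E !inE eqxx orbT.
  by rewrite Hc' !inE.
- have Ex : xv = x by move/eqP: H1 => [->].
  subst xv.
  case/orP: H2 => /eqP Hc'; first by exists zu; rewrite -?Hc'.
  have : (inr zu : vert l) \in [set inl x; c] by rewrite E !inE eqxx.
  by rewrite Hc' !inE.
Qed.

Lemma degB'_step (F F' : {set {set vert l}}) s s' z x :
  F \subset F' -> {subset s <= s'} -> x \in s' -> x \notin s ->
  (degB' F s z + ([set inl x; inr z] \in F') <= degB' F' s' z)%N.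
Proof.
move=> HF Hs Hx Hnx; rewrite /degB'.
set A1 := [set y | _]; set A2 := [set y | _].
have sub : A1 \subset A2.
  apply/fintype.subsetP => y; rewrite !inE => /andP [H1 H2].
  by rewrite (fintype.subsetP HF _ H1) (Hs _ H2).
case Hb: (_ \in F') => /=; last by rewrite addn0 subset_leq_card.
have xA1 : x \notin A1 by rewrite inE (negbTE Hnx) andbF.
have := cardsU1 x A1; rewrite xA1 add1n addn1 => <-.
apply: subset_leq_card; apply/fintype.subsetP => y; rewrite in_setU1 => /orP [/eqP -> | H].
  by rewrite inE Hb Hx.
exact: (fintype.subsetP sub).
Qed.

Lemma exists_sub_card (T : finType) (S : {set T}) k : (k <= #|S|)%N ->
  exists2 S1 : {set T}, S1 \subset S & #|S1| = k.
Proof.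
elim: k => [|k IH] Hk; first by exists finset.set0; rewrite ?finset.sub0set ?cards0.
have [S1 HS1 Hc] := IH (ltnW Hk).
have : (0 < #|S :\: S1|)%N by rewrite cardsDS // Hc subn_gt0.
case/card_gt0P => a; rewrite inE => /andP [Ha1 Ha].
exists (a |: S1); first by rewrite finset.subUset finset.sub1set Ha HS1.
by rewrite cardsU1 Ha1 Hc.
Qed.

End Aux.

Section Key.
Variables (R : realType) (l : nat) (r : Zv l)
    (d : measure_display) (Omega : measurableType d) (Pr : probability Omega R)
    (A : Omega -> seq (Xv l) -> {set {set vert l}})
    (HA : forall w, online_alg r (A w))
    (Hmeas : rand_measurable A).

Definition Ed (q sigma : seq (Xv l)) (z : Zv l) : \bar R :=
  (\int[Pr]_w ((degB' (A w q) sigma z)%:R)%:E)%E.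

Lemma meas_fun_alg (q : seq (Xv l)) (h : {set {set vert l}} -> \bar R) :
  measurable_fun setT (fun w => h (A w q)).
Proof.
move=> _ Y mY; rewrite setTI.
have -> : ((fun w => h (A w q)) @^-1` Y =
   \bigcup_(F in [set F | Y (h F)]) [set w | A w q = F])%classic.
  apply/seteqP; split => w /=.
  - by move=> Hy; exists (A w q).
  - by case=> F /= HF HF2; rewrite HF2.
apply: fin_bigcup_measurable; first exact: finite_finset.
by move=> F _; exact: Hmeas.
Qed.

Lemma meas_deg q sigma z :
  measurable_fun setT (fun w => (((degB' (A w q) sigma z)%:R : R)%:E)).
Proof. exact: (meas_fun_alg q (fun F => ((degB' F sigma z)%:R : R)%:E)). Qed.

Lemma Ed_ge0 q sigma z : (0 <= Ed q sigma z)%E.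
Proof. by apply: integral_ge0 => w _; rewrite lee_fin ler0n. Qed.


Lemma int_add (f g : Omega -> \bar R) :
  measurable_fun setT f -> measurable_fun setT g ->
  (forall w, (0 <= f w)%E) -> (forall w, (0 <= g w)%E) ->
  (\int[Pr]_w (f w + g w) = \int[Pr]_w f w + \int[Pr]_w g w)%E.
Proof. by move=> mf mg f0 g0; apply: ge0_integralD => // w _. Qed.

Lemma int_le (f g : Omega -> \bar R) :
  measurable_fun setT f -> measurable_fun setT g ->
  (forall w, (0 <= f w)%E) -> (forall w, (f w <= g w)%E) ->
  (\int[Pr]_w f w <= \int[Pr]_w g w)%E.
Proof. by move=> mf mg f0 fg; apply: ge0_le_integral => // w _. Qed.

Lemma key s : forall (S : {set Zv l}) (p : seq (Xv l)), #|S| = (2 ^ s)%N ->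
  exists sigma : seq (Xv l), exists zs : Zv l, exists f : Xv l -> Zv l,
  [/\ forall x : Xv l, x \in sigma -> val x \subset S, zs \in S,
      forall x : Xv l, x \in sigma -> [&& f x \in val x, f x \in S & f x != zs],
      {in sigma &, injective f} &
      ((s%:R / 2 : R)%:E <= Ed (p ++ sigma) sigma zs)%E].
Proof.
elim: s => [|s IH] S p HS.
  have /cards1P [z ->] : #|S| == 1%N by rewrite HS.
  exists [::], z, (fun _ => z); split => //; first by rewrite set11.
  by rewrite mul0r; exact: Ed_ge0.
have [S1 sub1 HS1] : exists2 S1 : {set Zv l}, S1 \subset S & #|S1| = (2 ^ s)%N.
  by apply: exists_sub_card; rewrite HS expnS leq_pmull // expn_gt0.
set S2 := S :\: S1.
have HS2 : #|S2| = (2 ^ s)%N by rewrite cardsDS // HS HS1 expnS mul2n -addnn addnK.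
have sub2 : S2 \subset S by exact: subsetDl.
have [sigma1 [z1 [f1 [Hs1 Hz1 Hf1 Hi1 HE1]]]] := IH S1 p HS1.
have [sigma2 [z2 [f2 [Hs2 Hz2 Hf2 Hi2 HE2]]]] := IH S2 (p ++ sigma1) HS2.
have z2S1 : z2 \notin S1 by move: Hz2; rewrite inE => /andP [].
have z1S2 : z1 \notin S2 by rewrite inE Hz1.
have z12 : z1 != z2 by apply: contraNneq z2S1 => <-.
have Hxc : #|[set z1; z2]| == 2 by rewrite cards2 z12.
pose x : Xv l := exist _ [set z1; z2] Hxc.
have xs1 : x \notin sigma1.
  apply/negP => /Hs1 /fintype.subsetP H.
  by move: (H z2 (set22 z1 z2)); rewrite (negbTE z2S1).
have xs2 : x \notin sigma2.
  apply/negP => /Hs2 /fintype.subsetP H.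
  by move: (H z1 (set21 z1 z2)); rewrite (negbTE z1S2).
pose sigma := sigma1 ++ sigma2 ++ [:: x].
have Hpt : forall w,
  (degB' (A w (p ++ sigma1)) sigma1 z1 + degB' (A w ((p ++ sigma1) ++ sigma2)) sigma2 z2 + 1
    <= degB' (A w (p ++ sigma)) sigma z1 + degB' (A w (p ++ sigma)) sigma z2)%N.
  move=> w.
  have xin : x \in sigma by rewrite !mem_cat mem_seq1 eqxx !orbT.
  have [z Hz He] : exists2 z, z \in val x & [set inl x; inr z] \in A w (p ++ sigma).
    case: (HA w) => _ _ /(_ (p ++ sigma)) [Hsub Hconn].
    have xin' : x \in p ++ sigma by rewrite mem_cat xin orbT.
    exact: (edge_of_conn Hsub (Hconn x xin')).
  have M1 : A w (p ++ sigma1) \subset A w (p ++ sigma).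
    by have := alg_mono (HA w) (p ++ sigma1) (sigma2 ++ [:: x]); rewrite -catA.
  have M2 : A w ((p ++ sigma1) ++ sigma2) \subset A w (p ++ sigma).
    by have := alg_mono (HA w) ((p ++ sigma1) ++ sigma2) [:: x]; rewrite -!catA.
  have sb1 : {subset sigma1 <= sigma} by move=> y Hy; rewrite mem_cat Hy.
  have sb2 : {subset sigma2 <= sigma} by move=> y Hy; rewrite !mem_cat Hy orbT.
  have L1 := degB'_step z1 M1 sb1 xin xs1.
  have L2 := degB'_step z2 M2 sb2 xin xs2.
  move: Hz; rewrite /= !inE => /orP [] /eqP Ez; rewrite Ez in He;
    rewrite He /= in L1 L2.
  - rewrite -addnA [(_ + 1)%N]addnC addnA; apply: leq_add; first exact: L1.
    exact: leq_trans (leq_addr _ _) L2.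
  - rewrite -addnA; apply: leq_add; last exact: L2.
    exact: leq_trans (leq_addr _ _) L1.
have Hsum : ((s.+1%:R / 2 : R)%:E + (s.+1%:R / 2 : R)%:E
    <= Ed (p ++ sigma) sigma z1 + Ed (p ++ sigma) sigma z2)%E.
  rewrite /Ed -int_add; [|exact: meas_deg|exact: meas_deg
     |by move=> w; rewrite lee_fin ler0n|by move=> w; rewrite lee_fin ler0n].
  apply: (@le_trans _ _ ((\int[Pr]_w (((degB' (A w (p ++ sigma1)) sigma1 z1)%:R : R)%:E
     + ((((degB' (A w ((p ++ sigma1) ++ sigma2)) sigma2 z2)%:R : R)%:E + 1))))%E)).
  - rewrite int_add; [|exact: meas_deg
       |exact: (emeasurable_funD (meas_deg _ _ _) (measurable_cst _))
       |by move=> w; rewrite lee_fin ler0n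
       |by move=> w; rewrite adde_ge0 // lee_fin ler0n].
    rewrite int_add; [|exact: meas_deg|exact: measurable_cst
       |by move=> w; rewrite lee_fin ler0n|by move=> w; rewrite lee_fin].
    have P1 : forall X : \bar R, X = Pr setT -> X = 1%E by move=> X ->; exact: probability_setT.
    rewrite integral_cst // [X in (1 * X)%E]P1 ?mul1e //.
    apply: le_trans (leeD HE1 (leeD HE2 (lexx 1%E))).
    rewrite -!EFinD lee_fin.
    by rewrite -splitr addrA -splitr -[s.+1]addn1 natrD mulr1n.
  - apply: int_le.
    + exact: (emeasurable_funD (meas_deg _ _ _) (emeasurable_funD (meas_deg _ _ _) (measurable_cst _))).
    + exact: (emeasurable_funD (meas_deg _ _ _) (meas_deg _ _ _)).
    + by move=> w; rewrite !adde_ge0 // lee_fin ler0n.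
    + move=> w; rewrite -!EFinD lee_fin.
      have := Hpt w; rewrite -(ler_nat R) !natrD mulr1n addrA; exact.
have z1S : z1 \in S by exact: (fintype.subsetP sub1).
have z2S : z2 \in S by exact: (fintype.subsetP sub2).
have Hfin : forall zs zo, zs \in [set z1; z2] -> zo \in [set z1; z2] -> zs != zo ->
    ((s.+1%:R / 2 : R)%:E <= Ed (p ++ sigma) sigma zs)%E ->
  exists sigma : seq (Xv l), exists zs : Zv l, exists f : Xv l -> Zv l,
  [/\ forall x : Xv l, x \in sigma -> val x \subset S, zs \in S,
      forall x : Xv l, x \in sigma -> [&& f x \in val x, f x \in S & f x != zs],
      {in sigma &, injective f} &
      ((s.+1%:R / 2 : R)%:E <= Ed (p ++ sigma) sigma zs)%E].
  move=> zs zo Hzs Hzo Hneq HE.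
  have zsS : zs \in S by case/set2P: Hzs => ->.
  have zoS : zo \in S by case/set2P: Hzo => ->.
  pose F y := if y == x then zo else if y \in sigma1 then f1 y else f2 y.
  have Hcls : forall y, y \in sigma -> y != x ->
     [/\ F y \notin [set z1; z2], F y \in val y, F y \in S & (F y \in S1) = (y \in sigma1)].
    move=> y; rewrite /F !mem_cat mem_seq1 => Hy /negbTE Hyx; rewrite Hyx.
    case: ifP => Hy1.
      case/and3P: (Hf1 _ Hy1) => H1 H2 H3; split => //.
      - rewrite !inE negb_or H3 /=; apply: contraNneq z2S1 => <-; exact: H2.
      - exact: (fintype.subsetP sub1).
    have Hy2 : y \in sigma2 by move: Hy; rewrite Hy1 Hyx orbF.
    case/and3P: (Hf2 _ Hy2) => H1 H2 H3; split => //.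
    - rewrite !inE negb_or H3 andbT; apply: contraNneq z1S2 => <-; exact: H2.
    - exact: (fintype.subsetP sub2).
    - by apply/negbTE; move: H2; rewrite inE => /andP [].
  exists sigma, zs, F; split => //.
  - move=> y; rewrite !mem_cat mem_seq1 => /or3P [H|H|/eqP->].
    + exact: (fintype.subset_trans (Hs1 _ H) sub1).
    + exact: (fintype.subset_trans (Hs2 _ H) sub2).
    + by rewrite /= finset.subUset !finset.sub1set z1S z2S.
  - move=> y Hy; case: (eqVneq y x) => [->|Hyx].
      by rewrite /F eqxx /= Hzo zoS eq_sym Hneq.
    case: (Hcls y Hy Hyx) => H1 H2 H3 _; rewrite H2 H3 /=.
    by apply: contraNneq H1 => ->.
  - move=> y y' Hy Hy'.
    case: (eqVneq y x) => [->|Hyx]; case: (eqVneq y' x) => [->|Hyx'] //.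
    + have [H1 _ _ _] := Hcls y' Hy' Hyx'.
      by rewrite {1}/F eqxx => E; rewrite -E Hzo in H1.
    + have [H1 _ _ _] := Hcls y Hy Hyx.
      by rewrite {2}/F eqxx => E; rewrite E Hzo in H1.
    have [_ _ _ C1] := Hcls y Hy Hyx.
    have [_ _ _ C2] := Hcls y' Hy' Hyx'.
    move=> E.
    case Hy1: (y \in sigma1); case Hy1': (y' \in sigma1).
    + by apply: Hi1 => //; move: E; rewrite /F (negbTE Hyx) (negbTE Hyx') Hy1 Hy1'.
    + by move: C1 C2; rewrite E Hy1 Hy1' => ->.
    + by move: C1 C2; rewrite E Hy1 Hy1' => ->.
    + have Hy2 : y \in sigma2 by move: Hy; rewrite !mem_cat mem_seq1 Hy1 (negbTE Hyx) orbF.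
      have Hy2' : y' \in sigma2 by move: Hy'; rewrite !mem_cat mem_seq1 Hy1' (negbTE Hyx') orbF.
      by apply: Hi2 => //; move: E; rewrite /F (negbTE Hyx) (negbTE Hyx') Hy1 Hy1'.
have [H1|H1] := leP ((s.+1%:R / 2 : R)%:E) (Ed (p ++ sigma) sigma z1).
  by apply: (Hfin z1 z2) => //; rewrite !inE eqxx ?orbT.
apply: (Hfin z2 z1) => //; first by rewrite !inE eqxx ?orbT.
- by rewrite !inE eqxx ?orbT.
- by rewrite eq_sym.
rewrite leNgt; apply/negP => H2.
by have := lteD H1 H2; rewrite ltNge Hsum.
Qed.

End Key.

Unset Implicit Arguments. Set Strict Implicit.
Theorem lemma4 (R : realType) (l : nat) (r : Zv l)
    (d : measure_display) (Omega : measurableType d) (Pr : probability Omega R)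
    (A : Omega -> seq (Xv l) -> {set {set vert l}})
    (HA : forall w, online_alg r (A w))
    (Hmeas : rand_measurable A)
    (s : nat) (S : {set Zv l}) (hs : (s <= l)%N) (hS : #|S| = (2 ^ s)%N) :
  exists sigma : seq (Xv l),
    (forall x, x \in sigma -> val x \subset S) /\
    exists2 zstar, zstar \in S &
      ((s%:R / 2 : R)%:E <= Edeg' Pr A sigma zstar)%E /\
      exists OFF : {set {set vert l}},
        steiner_sol r sigma OFF /\
        (forall z, z \in S -> (degB OFF z <= 1)%N) /\
        (forall z, (z \notin S) || (z == zstar) -> degB OFF z = 0%N).
Proof.
have [sigma [zs [f [Hs HzS Hf Hi HE]]]] := key Pr HA Hmeas [::] hS.
exists sigma; split => //; exists zs => //; split; first exact: HE.
pose OFF := ((fun x => [set inl x; inr (f x)]) @: [set x | x \in sigma])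
   :|: ((fun z => [set inr z; inr r]) @: [set z | z != r]) : {set {set vert l}}.
exists OFF.
have Hdeg : forall z, degB OFF z = #|[set y | (y \in sigma) && (f y == z)]|.
  move=> z; rewrite /degB; apply: eq_card => y; rewrite !inE.
  apply/idP/idP.
  - case/orP => /imsetP [a Ha E].
    + have := set21 (inl y : vert l) (inr z); rewrite E !inE => H1.
      have := set22 (inl y : vert l) (inr z); rewrite E !inE => H2.
      have Ey : y = a by case/orP: H1 => /eqP Ey; [case: Ey | discriminate Ey].
      have Ez : z = f a by case/orP: H2 => /eqP Ez; [discriminate Ez | case: Ez].
      subst.
      by rewrite eqxx andbT; move: Ha; rewrite inE.
    + have := set21 (inl y : vert l) (inr z); rewrite E !inE => H1.
      by case/orP: H1 => /eqP Ey; discriminate Ey.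
  - move=> /andP [Hy /eqP <-]; apply/orP; left; apply/imsetP; exists y => //.
    by rewrite inE.
split; last split.
- split.
  + apply/fintype.subsetP => e; rewrite inE => /orP [] /imsetP [a Ha ->];
      rewrite inE; apply/existsP.
    * exists (inl a); apply/existsP; exists (inr (f a)); rewrite eqxx andbT /=.
      by move: Ha; rewrite inE => /Hf /and3P [].
    * exists (inr a); apply/existsP; exists (inr r); rewrite eqxx andbT /=.
      by move: Ha; rewrite inE.
  + move=> x Hx; rewrite /connF.
    have C1 : connect (fun a b => [set a; b] \in OFF) (inl x) (inr (f x)).
      apply: connect1; rewrite inE; apply/orP; left; apply/imsetP; exists x => //.
      by rewrite inE.
    apply: (connect_trans C1).
    case: (eqVneq (f x) r) => [->|Hne]; first exact: connect0.
    apply: connect1; rewrite inE; apply/orP; right; apply/imsetP; exists (f x) => //.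
    by rewrite inE.
- move=> z Hz; rewrite Hdeg.
  apply/card_le1_eqP => y y'; rewrite !inE => /andP [Hy /eqP E] /andP [Hy' /eqP E'].
  by apply: Hi => //; rewrite E E'.
- move=> z Hz; rewrite Hdeg.
  apply/eqP; rewrite cards_eq0; apply/eqP/setP => y; rewrite !inE.
  apply/negbTE/negP => /andP [Hy /eqP E].
  case/and3P: (Hf y Hy) => _ H2 H3.
  case/orP: Hz => [/negP|/eqP]; rewrite -E //.
  by move=> Ez; rewrite Ez eqxx in H3.
Qed.
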